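(* Let $w$ be a word over the alphabet $\{a^{\pm1},t^{\pm1},x^{\pm1}\}$ with $\sigma_x(w)=0$. If the equation $w=1$ has a solution in $L_2$, then it has a solution $x=(\delta,f)\in L_2$ with $$|\delta|\le 2^{|w|^2/2}+2|w|^2+3|w|+1 .$$
   Context: $\mathbb{Z}_2$ is the field with two elements and $\mathbb{Z}_2[z^{\pm1}]$ the ring of Laurent polynomials over it. The lamplighter group $L_2=\mathbb{Z}_2\wr\mathbb{Z}$ is realized as the set $\mathbb{Z}\times\mathbb{Z}_2[z^{\pm1}]$ with multiplication $(\delta_1,f_1)(\delta_2,f_2)=(\delta_1+\delta_2,\ f_1z^{-\delta_2}+f_2)$; it is generated by $a=(0,1)$ and $t=(1,0)$. A one-variable equation is given by a word $w$ over $\{a^{\pm1},t^{\pm1},x^{\pm1}\}$ (an element of the free group $F(a,t,x)$), $|w|$ is its length, and a solution of $w=1$ is an element $g\in L_2$ such that $w(a,t,g)=1$ in $L_2$, where $w(a,t,g)$ is the image of $w$ under the homomorphism $F(a,t,x)\to L_2$ with $a\mapsto a$, $t\mapsto t$, $x\mapsto g$. $\sigma_x(w)$ and $\sigma_t(w)$ denote the exponent sums of $x$ and of $t$ in $w$. *)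

(* Defs.v *)
From HB Require Import structures.
From mathcomp Require Import all_boot all_algebra.
From mathcomp Require Import finmap.
From Stdlib Require Reals.

Set Implicit Arguments.
Unset Strict Implicit.
Unset Printing Implicit Defensive.

Import GRing.Theory.
Local Open Scope fset_scope.

(* A Laurent polynomial over Z_2 is identified with its (finite) support:
   the finite set of exponents k with coefficient 1. *)
Definition laurent2 := {fset int}.

(* addition in Z_2[z^{+-1}] : symmetric difference of supports *)
Definition ladd (f g : laurent2) : laurent2 := (f `\` g) `|` (g `\` f).

(* f * z^{-d} : every exponent k is sent to k - d *)
Definition lshift (f : laurent2) (d : int) : laurent2 :=
  [fset (k - d)%R | k in f].

Definition L2 := (int * laurent2)%type.

Definition L2mul (g h : L2) : L2 :=
  ((g.1 + h.1)%R, ladd (lshift g.2 h.1) h.2).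

Definition L2one : L2 := (0%R, fset0).

Definition L2inv (g : L2) : L2 := ((- g.1)%R, lshift g.2 (- g.1)%R).

Definition L2a : L2 := (0%R, [fset (0%R : int)]).
Definition L2t : L2 := (1%R, fset0).

(* Words over {a^{+-1}, t^{+-1}, x^{+-1}}: a letter is a generator together
   with a flag that is true for the inverse letter. *)
Inductive gen := Ga | Gt | Gx.
Definition letter := (gen * bool)%type.
Definition word := seq letter.

Definition gen_img (g : L2) (s : gen) : L2 :=
  match s with Ga => L2a | Gt => L2t | Gx => g end.

Definition letter_img (g : L2) (l : letter) : L2 :=
  if l.2 then L2inv (gen_img g l.1) else gen_img g l.1.

Definition eval_word (w : word) (g : L2) : L2 :=
  foldr (fun l acc => L2mul (letter_img g l) acc) L2one w.

Definition sigma_x (w : word) : int :=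
  (\sum_(l <- w) (if l.1 is Gx then (if l.2 then -1 else 1) else 0))%R.

Definition is_solution (w : word) (g : L2) : Prop := eval_word w g = L2one.

Definition bound (n : nat) : Rdefinitions.R :=
  Rdefinitions.Rplus
    (Rpower.Rpower (Raxioms.INR 2)
       (Rdefinitions.Rdiv (Raxioms.INR (n * n)) (Raxioms.INR 2)))
    (Raxioms.INR (2 * (n * n) + 3 * n + 1)).

Definition abs_le_bound (delta : int) (n : nat) : Prop :=
  Rdefinitions.Rle (Raxioms.INR (absz delta)) (bound n).

(* Main.v *)
Require Import Defs.
From HB Require Import structures.
From mathcomp Require Import all_boot all_algebra.
From mathcomp Require Import finmap.
From mathcomp Require Import zify ring.
Set Implicit Arguments.
Unset Strict Implicit.
Unset Printing Implicit Defensive.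
Import GRing.Theory.
Local Open Scope ring_scope.

Section PolyF.
Variable F : fieldType.
Implicit Types (u v p q : {poly F}).

Definition ldvd u v := exists j : nat, u %| 'X^j * v.

Lemma decompX u : u != 0 -> exists i u', u = 'X^i * u' /\ u'`_0 != 0.
Proof.
move: {2}(size u) (leqnn (size u)) => n; elim: n u => [|n IH] u Hs Hu.
  by move: Hu; rewrite -size_poly_eq0; move: Hs; case: (size u).
case H0: (u`_0 == 0); last by exists 0%N, u; rewrite expr0 mul1r H0.
have Hr : root u 0 by rewrite /root horner_coef0.
move/factor_theorem: Hr => [q Hq].
move: Hq; rewrite polyC0 subr0 => Hq.
have Hq0 : q != 0 by apply: contraNneq Hu => E; rewrite Hq E mul0r.
have Hsq : (size q <= n)%N.
  by move: Hs; rewrite Hq size_mulX.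
have [i [u' [Eq Hu']]] := IH q Hsq Hq0.
by exists i.+1, u'; split=> //; rewrite Hq Eq exprS; ring.
Qed.

Lemma coprimeX u j : u`_0 != 0 -> coprimep u ('X^j).
Proof.
move=> H; have : coprimep u ('X - 0%:P) by rewrite coprimep_XsubC /root horner_coef0.
by rewrite polyC0 subr0 => /(coprimep_expr j).
Qed.

Lemma dvdX_cancel u v j : u`_0 != 0 -> u %| 'X^j * v -> u %| v.
Proof. by move=> H; rewrite Gauss_dvdpr // coprimeX. Qed.

Lemma span_le u v j m : v != 0 -> u %| 'X^j * v -> u`_m != 0 ->
  (size u <= m + size v)%N.
Proof.
move=> Hv Hd Hm.
have Hu : u != 0 by apply: contraNneq Hm => ->; rewrite coef0.
have [i [u' [Hui Hu']]] := decompX Hu.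
have Hu'0 : u' != 0 by apply: contraNneq Hu' => E; rewrite E coef0.
have Him : (i <= m)%N.
  move: Hm; rewrite Hui coefXnM; case: ltnP => //; by rewrite eqxx.
have Hd' : u' %| v.
  apply: (@dvdX_cancel u' v (j + 0)%N Hu').
  rewrite addn0; apply: dvdp_trans Hd; rewrite Hui; exact: dvdp_mull.
have := dvdp_leq Hv Hd'.
rewrite Hui mulrC size_mulXn // => H1; apply: leq_trans (leq_add Him H1); by [].
Qed.

Lemma ldvd_cancel u v : u`_0 != 0 -> ldvd u v <-> u %| v.
Proof.
move=> H; split; first by case=> j; exact: dvdX_cancel.
by move=> Hd; exists 0%N; rewrite expr0 mul1r.
Qed.

End PolyF.

Section Biv.
Variable F : fieldType.
Implicit Types (Q P A : {poly {poly F}}).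

Lemma hornerXE_step Q1 (c : {poly F}) E :
  (Q1 * 'X + c%:P).['X^E] = Q1.['X^E] * 'X^E + c.
Proof. by rewrite hornerD hornerMX hornerC. Qed.

Lemma coef_step Q1 (c : {poly F}) i :
  (Q1 * 'X + c%:P)`_i = if i == 0%N then c else Q1`_i.-1.
Proof. by rewrite coefD coefMX coefC; case: i => [|i] //=; rewrite ?add0r ?addr0. Qed.

Lemma spec_inj Q E : (forall i, leq (size Q`_i) (E)) -> Q.['X^E] = 0 -> Q = 0.
Proof.
elim/poly_ind: Q => [//|Q1 c IH] Hs.
rewrite hornerXE_step => H.
have Hc : c = 0.
  apply/polyP => m; rewrite coef0.
  have := congr1 (fun p : {poly F} => p`_m) H; rewrite coefD coefMXn coef0.
  case: ltnP => Hm; first by rewrite add0r.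
  move=> _; have := Hs 0%N; rewrite coef_step /= => Hc.
  by move/leq_sizeP: Hc; apply.
move: H; rewrite Hc addr0 => /eqP; rewrite mulf_eq0 expf_eq0 polyX_eq0 andbF orbF => /eqP H1.
rewrite (IH _ H1) ?mul0r ?Hc ?addr0 //.
move=> i; have := Hs i.+1; by rewrite coef_step.
Qed.

Lemma spec_size Q k e E : (size Q <= k)%N -> (forall i, leq (size Q`_i) (e)) ->
  (size Q.['X^E] <= k.-1 * E + e)%N.
Proof.
elim/poly_ind: Q k => [|Q1 c IH] k Hk Hs; first by rewrite horner0 size_poly0.
rewrite hornerXE_step.
have Hc : (size c <= e)%N by have := Hs 0%N; rewrite coef_step.
have HQ1 : forall i, leq (size Q1`_i) (e) by move=> i; have := Hs i.+1; rewrite coef_step.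
have [->|HQ1n] := eqVneq Q1 0.
  by rewrite horner0 mul0r add0r; apply: leq_trans Hc (leq_addl _ _).
have Hsz : size (Q1 * 'X + c%:P) = (size Q1).+1.
  by rewrite -cons_poly_def size_cons_poly /nilp size_poly_eq0 (negbTE HQ1n).
rewrite Hsz in Hk.
have H2 := IH (size Q1) (leqnn _) HQ1.
apply: leq_trans (size_polyD _ _) _.
rewrite geq_max; apply/andP; split; last first.
  by apply: leq_trans Hc _; apply: leq_addl.
have [->|Hn] := eqVneq (Q1.['X^E]) 0; first by rewrite mul0r size_poly0.
rewrite size_mulXn //.
have Hk1 : (1 <= (size Q1))%N by rewrite size_poly_gt0.
have : ((size Q1).-1 * E + E <= k.-1 * E)%N.
  rewrite addnC -mulSn prednK //; apply: leq_mul => //; lia.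
lia.
Qed.

Lemma spec_low P E m : (m < E)%N -> (P.['X^E])`_m = P`_0`_m.
Proof.
elim/poly_ind: P => [|P1 c _] Hm; first by rewrite horner0 !coef0.
rewrite hornerXE_step coefD coefMXn Hm add0r coef_step //.
Qed.

Lemma decomp_top P : P = take_poly (size P).-1 P + (lead_coef P)%:P * 'X^((size P).-1).
Proof.
apply/polyP => i; rewrite coefD coef_take_poly coefCM coefXn lead_coefE.
case: ltngtP => H; rewrite ?mulr0 ?addr0 ?mulr1 ?add0r //.
- rewrite nth_default //; move: H; case: (size P) => //= n; by [].
- by rewrite H.
Qed.

Lemma spec_top P E a : P != 0 -> (forall i, leq (size P`_i) (a.+1)) -> (a.+1 <= E)%N ->
  size P.['X^E] = ((size P).-1 * E + size (lead_coef P))%N.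
Proof.
move=> HP Hs HE.
rewrite {1}(decomp_top P) hornerD hornerCM hornerXn -exprM.
have Hl : lead_coef P != 0 by rewrite lead_coef_eq0.
set k := (size P).-1.
have Htop : size (lead_coef P * 'X^(E * k)) = (k * E + size (lead_coef P))%N.
  by rewrite size_mulXn // mulnC.
rewrite addrC size_polyDl Htop //.
have Hs0 : (0 < size (lead_coef P))%N by rewrite size_poly_gt0.
have [Hk0|Hkpos] := posnP k.
  have : size (take_poly k P) = 0%N by apply/eqP; rewrite -leqn0 -Hk0 size_take_poly.
  move/eqP; rewrite size_poly_eq0 => /eqP E0; rewrite E0 horner0 size_poly0; apply: leq_trans Hs0 (leq_addl _ _).
have H1 := @spec_size (take_poly k P) k (a.+1) E (size_take_poly _ _).
have H2 : (size (take_poly k P).['X^E] <= k.-1 * E + a.+1)%N.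
  apply: H1 => i; rewrite coef_take_poly; case: ifP => _; rewrite ?size_poly0 //.
apply: leq_ltn_trans H2 _.
have -> : (k * E = k.-1 * E + E)%N by rewrite -{1}(prednK Hkpos) mulSn addnC.
lia.
Qed.

End Biv.

Section PDiv.
Variable F : fieldType.

Lemma size_suble (p q : {poly F}) m : leq (size p) m -> leq (size q) m -> leq (size (p - q)) m.
Proof.
move=> Hp Hq; apply: leq_trans (size_polyD _ _) _; rewrite size_polyN geq_max Hp Hq //.
Qed.

Lemma pdiv_bound (P : {poly {poly F}}) a : P != 0 -> (forall i, leq (size P`_i) a.+1) ->
  forall j e (A : {poly {poly F}}), leq (size A) ((size P).-1 + j) ->
  (forall i, leq (size A`_i) e) ->
  exists Q R : {poly {poly F}}, ((lead_coef P)%:P ^+ j * A = Q * P + R) /\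
    leq (size R) (size P).-1 /\ (forall i, leq (size R`_i) (e + j * a)).
Proof.
move=> HP HPs j; elim: j => [|j IH] e A HA HAs.
  exists 0, A; rewrite expr0 mul1r mul0r add0r; split => //; split; first by rewrite addn0 in HA.
  by move=> i; rewrite mul0n addn0.
set K := (size P).-1.
set lc := lead_coef P.
set top := A`_(K + j).
set A' := lc%:P * A - top%:P * ('X^j * P).
have HA' : leq (size A') (K + j).
  apply/leq_sizeP => i Hi.
  rewrite /A' coefB !coefCM coefXnM.
  have Hij : (i < j)%N = false by apply/negbTE; rewrite -leqNgt; lia.
  rewrite Hij.
  have [Heq|Hlt] := eqVneq i (K + j).
    rewrite Heq addnK /top /lc lead_coefE -/K; apply/eqP; rewrite subr_eq0 mulrC; by [].
  have Hi' : (K + j < i)%N by rewrite ltn_neqAle eq_sym Hlt Hi.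
  rewrite (nth_default 0 (_ : leq (size A) i)); last by move: HA; rewrite addnS => H; apply: leq_trans H Hi'.
  rewrite (nth_default 0 (_ : leq (size P) (i - j))) ?mulr0 ?subr0 //.
  have Hsp : (0 < size P)%N by rewrite size_poly_gt0.
  rewrite /K in Hi'; lia.
have HA's : forall i, leq (size A'`_i) (e + a).
  move=> i; rewrite /A' coefB !coefCM coefXnM; apply: size_suble.
    apply: leq_trans (size_polyMleq _ _) _.
    have Hl : leq (size lc) a.+1 by rewrite /lc lead_coefE.
    have := HAs i; rewrite -subn1; move: Hl; set s1 := size lc; set s2 := size (A`_i); lia.
  case: ifP => _; first by rewrite mulr0 size_poly0.
  apply: leq_trans (size_polyMleq _ _) _.
  have := HAs (K + j)%N; have := HPs (i - j)%N; rewrite -/top -subn1.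
  set s1 := size top; set s2 := size _; lia.
have [Q [R [HQR [HR HRs]]]] := IH (e + a)%N A' HA' HA's.
exists (Q + (lc%:P) ^+ j * top%:P * 'X^j), R; split; last split => //.
  rewrite exprSr -mulrA.
  have -> : lc%:P * A = A' + top%:P * ('X^j * P) by rewrite /A' subrK.
  rewrite mulrDr HQR; ring.
by move=> i; have := HRs i; rewrite mulSn; lia.
Qed.

Lemma dvd_horner_diff (d : {poly F}) (Q : {poly {poly F}}) x x' :
  d %| x' - x -> d %| Q.[x'] - Q.[x].
Proof.
move=> H; elim/poly_ind: Q => [|Q1 c IH]; first by rewrite !horner0 subr0 dvdp0.
rewrite !hornerD !hornerMX !hornerC.
have -> : Q1.[x'] * x' + c - (Q1.[x] * x + c) = (Q1.[x'] - Q1.[x]) * x' + Q1.[x] * (x' - x) by ring.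
by apply: dvdp_add; [apply: dvdp_mulr | apply: dvdp_mull].
Qed.

Lemma Xr_dvd r q : ('X^r - 1 : {poly F}) %| 'X^(r * q) - 1.
Proof.
elim: q => [|q IH]; first by rewrite muln0 expr0 subrr dvdp0.
have -> : ('X^(r * q.+1) - 1 : {poly F}) = 'X^r * ('X^(r * q) - 1) + ('X^r - 1).
  by rewrite mulnS exprD; ring.
by apply: dvdp_add; [apply: dvdp_mull | apply: dvdpp].
Qed.

Lemma period_shift (c : {poly F}) (Q : {poly {poly F}}) r E q :
  c %| 'X^r - 1 -> c %| Q.['X^(E + r * q)] - Q.['X^E].
Proof.
move=> H; apply: dvd_horner_diff.
have -> : ('X^(E + r * q) - 'X^E : {poly F}) = 'X^E * ('X^(r * q) - 1) by rewrite exprD; ring.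
by apply: dvdp_mull; apply: dvdp_trans H (Xr_dvd _ _).
Qed.

End PDiv.

Lemma period (c : {poly 'F_2}) : c`_0 != 0 ->
  exists r, (0 < r)%N /\ leq r (2 ^ (size c).-1) /\ c %| 'X^r - 1.
Proof.
move=> Hc0.
have Hc : c != 0 by apply: contraNneq Hc0 => E; rewrite E coef0.
set d := (size c).-1.
pose f := fun m : 'I_(2 ^ d).+1 => [ffun i : 'I_d => ('X^m %% c)`_i].
have : ~~ injectiveb f.
  apply/negP => /injectiveP Hi; have := @leq_card _ _ f Hi.
  rewrite card_ffun !card_ord; by rewrite ltnn.
move/injectivePn => [m [m' Hne Hf]].
have Hsz : forall k : nat, leq (size ('X^k %% c)) d.
  by move=> k; rewrite /d -ltnS prednK ?size_poly_gt0 // ltn_modp.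
have Heq : forall k1 k2 : nat, (forall i : 'I_d, ('X^k1 %% c)`_i = ('X^k2 %% c)`_i) ->
   c %| 'X^k1 - 'X^k2.
  move=> k1 k2 Hi.
  have Hm : 'X^k1 %% c = 'X^k2 %% c.
    apply/polyP => i; case: (ltnP i d) => Hid; first exact: (Hi (Ordinal Hid)).
    by rewrite !nth_default // (leq_trans (Hsz _) Hid).
  rewrite {1}(divp_eq ('X^k1) c) {1}(divp_eq ('X^k2) c) Hm.
  have -> : 'X^k1 %/ c * c + 'X^k2 %% c - ('X^k2 %/ c * c + 'X^k2 %% c) = ('X^k1 %/ c - 'X^k2 %/ c) * c by ring.
  by apply: dvdp_mull; apply: dvdpp.
have Hfi : forall i : 'I_d, ('X^m %% c)`_i = ('X^m' %% c)`_i.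
  by move=> i; have := congr1 (fun g : {ffun 'I_d -> 'F_2} => g i) Hf; rewrite /f !ffunE.
have key : forall k1 k2 : nat, (k1 < k2)%N -> c %| 'X^k2 - 'X^k1 ->
   c %| 'X^(k2 - k1) - 1.
  move=> k1 k2 Hlt H; apply: (@dvdX_cancel _ c _ k1 Hc0).
  by rewrite mulrBr mulr1 -exprD subnKC // ltnW.
have Hm1 := Heq m m' Hfi.
have Hm2 : c %| 'X^m' - 'X^m by rewrite -opprB dvdpNr.
case: (ltngtP m m') => Hmm.
- exists (m' - m)%N; split; first lia; split; last exact: key.
  have := ltn_ord m'; lia.
- exists (m - m')%N; split; first lia; split; last exact: key.
  have := ltn_ord m; lia.
- by move: Hne; rewrite (val_inj Hmm) eqxx.
Qed.

Notation F2 := 'F_2.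

Definition SS (A P : {poly {poly F2}}) (E : nat) := ldvd (P.['X^E]) (A.['X^E]).

Lemma hornerCX (c : {poly F2}) j x : ((c%:P) ^+ j).[x] = c ^+ j.
Proof. elim: j => [|j IH]; first by rewrite !expr0 hornerC. by rewrite !exprS hornerCM IH. Qed.

Lemma core0 (A P : {poly {poly F2}}) a b E0 : P`_0 != 0 ->
  (forall i, leq (size P`_i) a.+1) -> (forall i, leq (size A`_i) a.+1) ->
  leq (size A) b.+1 -> SS A P E0 ->
  exists E, SS A P E /\ (E < (b + 3) * a + 1 + 2 ^ ((b + 1) * a))%N.
Proof.
move=> HP0 HPs HAs HA HS0.
have HP : P != 0 by apply: contraNneq HP0 => E; rewrite E coef0.
set T := ((b + 3) * a + 1)%N.
case: (ltnP E0 T) => HE0.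
  exists E0; split => //; apply: leq_trans HE0 _; apply: leq_addr.
set K := (size P).-1.
set lc := lead_coef P.
have HlcP : lc != 0 by rewrite /lc lead_coef_eq0.
have HAK : leq (size A) (K + b.+1) by apply: leq_trans HA _; apply: leq_addl.
have [Q [R [HQR [HR HRs]]]] := @pdiv_bound _ P a HP HPs b.+1 a.+1 A HAK HAs.
set c := lc ^+ b.+1.
have Hc : c != 0 by rewrite expf_neq0.
have Hspec : forall E, c * A.['X^E] = Q.['X^E] * P.['X^E] + R.['X^E].
  by move=> E; have := congr1 (fun p => p.['X^E]) HQR; rewrite /= hornerM hornerCX hornerD hornerM.
have HaE0 : (a < E0)%N by apply: leq_trans HE0; rewrite /T; nia.
have HPE : forall E, (a < E)%N -> size P.['X^E] = (K * E + size lc)%N.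
  by move=> E HE; apply: spec_top HPs _.
have HPE0 : forall E, (a < E)%N -> P.['X^E] != 0.
  move=> E HE; rewrite -size_poly_gt0 HPE // addn_gt0 size_poly_gt0 HlcP orbT //.
have HR0 : R = 0.
  apply/eqP; apply: contraT => HRn.
  case: HS0 => j Hj.
  have HdR : P.['X^E0] %| 'X^j * R.['X^E0].
    have -> : 'X^j * R.['X^E0] = c * ('X^j * A.['X^E0]) - ('X^j * Q.['X^E0]) * P.['X^E0].
      have HR' : R.['X^E0] = c * A.['X^E0] - Q.['X^E0] * P.['X^E0] by rewrite Hspec; ring.
      by rewrite HR'; ring.
    by apply: dvdp_sub; [apply: dvdp_mull | apply: dvdp_mull; apply: dvdpp].
  have HRE0 : R.['X^E0] != 0.
    apply/negP => /eqP H0; move/negP: HRn; apply; apply/eqP; apply: spec_inj H0.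
    move=> i; apply: leq_trans (HRs i) _; apply: leq_trans _ HE0; rewrite /T; nia.
  set m := (size P`_0).-1.
  have HP00 : P`_0`_m != 0 by rewrite /m -lead_coefE lead_coef_eq0.
  have Hm : (m < E0)%N.
    by apply: leq_ltn_trans HaE0; rewrite /m; have := HPs 0%N; case: (size _) => //.
  have HPm : (P.['X^E0])`_m != 0 by rewrite spec_low.
  have Hsp := span_le HRE0 HdR HPm.
  rewrite HPE // in Hsp.
  have HmA : leq m a by rewrite /m; have := HPs 0%N; case: (size _) => //.
  have [HK0|HKp] := posnP K.
    have : size R = 0%N by apply/eqP; rewrite -leqn0; move: HR; rewrite -/K HK0.
    by move/eqP; rewrite size_poly_eq0 (negbTE HRn).
  have HsR := @spec_size _ R K (a.+1 + b.+1 * a) E0 HR HRs.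
  have Hl1 : (0 < size lc)%N by rewrite size_poly_gt0.
  have HKE : (K * E0 = K.-1 * E0 + E0)%N by rewrite -{1}(prednK HKp) mulSn addnC.
  rewrite HKE in Hsp.
  move: Hsp HsR HE0 Hl1 HmA; rewrite /T.
  set x1 := (K.-1 * E0)%N; set x2 := size R.['X^E0]; set x3 := size lc.
  nia.
have {}Hspec : forall E, c * A.['X^E] = Q.['X^E] * P.['X^E].
  by move=> E; rewrite Hspec HR0 horner0 addr0.
have [i [c' [Hcc' Hc'0]]] := decompX Hc.
have Hequiv : forall E, (a < E)%N -> SS A P E <-> c' %| Q.['X^E].
  move=> E HE; split.
    case=> j /dvdpP [q Hq].
    have H1 : 'X^j * Q.['X^E] = c * q.
      apply: (mulIf (HPE0 E HE)); rewrite -mulrA -Hspec; rewrite mulrA [_ * c]mulrC -mulrA Hq; ring.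
    apply: (@dvdX_cancel _ c' _ j Hc'0); rewrite H1 Hcc'; apply: dvdp_mulr.
    rewrite mulrC; exact: dvdp_mulIl.
  move=> /dvdpP [q Hq]; exists i; apply/dvdpP; exists q.
  apply: (@mulfI _ c Hc).
  rewrite mulrA [c * _]mulrC -mulrA Hspec Hq Hcc'; ring.
have [r [Hr0 [Hr Hcr]]] := period Hc'0.
set E := (T + (E0 - T) %% r)%N.
exists E; split.
  have HaE : (a < E)%N by rewrite /E; apply: (leq_trans _ (leq_addr _ _)); rewrite /T; nia.
  apply/(Hequiv E HaE).
  have HE0E : E0 = (E + r * ((E0 - T) %/ r))%N.
    rewrite /E -addnA [(_ %% r + _)%N]addnC mulnC -divn_eq subnKC //.
  have := period_shift Q E ((E0 - T) %/ r)%N Hcr; rewrite -HE0E => Hd.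
  have H0 := proj1 (Hequiv E0 HaE0) HS0.
  have -> : Q.['X^E] = Q.['X^E0] - (Q.['X^E0] - Q.['X^E]) by ring.
  exact: dvdp_sub H0 Hd.
have Hc'n : c' != 0 by apply: contraNneq Hc'0 => E1; rewrite E1 coef0.
have Hsc : size c = (i + size c')%N by rewrite Hcc' mulrC size_mulXn.
have Hsc2 := size_poly_exp_leq lc b.+1.
have Hlc : leq (size lc) a.+1 by rewrite /lc lead_coefE; apply: HPs.
have Hsc' : leq (size c').-1 ((b + 1) * a).
  have : leq (size c) ((size lc).-1 * b.+1).+1 by [].
  rewrite Hsc; move: Hlc; set s1 := size lc; set s2 := size c'.
  have Hs2 : (0 < s2)%N by rewrite /s2 size_poly_gt0.
  move=> Hlc H; have : (s1.-1 * b.+1 <= a * b.+1)%N by apply: leq_mul => //; lia.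
  rewrite addn1 mulnC; lia.
have Hr2 := leq_trans Hr (leq_pexp2l (isT : (0 < 2)%N) Hsc').
rewrite /E; have := ltn_pmod (E0 - T) Hr0; lia.
Qed.

Lemma ldvd_mulX (u v : {poly F2}) m : ldvd (u * 'X^m) v <-> ldvd u v.
Proof.
split.
  case=> j Hj; exists j; apply: dvdp_trans Hj; exact: dvdp_mulIl.
case=> j Hj; exists (m + j)%N; rewrite exprD -mulrA [_ * (_ * v)]mulrC.
by apply: dvdp_mul => //; apply: dvdpp.
Qed.

Lemma core (A P : {poly {poly F2}}) a b E0 :
  (forall i, leq (size P`_i) a.+1) -> (forall i, leq (size A`_i) a.+1) ->
  leq (size A) b.+1 -> SS A P E0 ->
  exists E, SS A P E /\ (leq E a \/ (P != 0 /\ (E < (b + 3) * a + 1 + 2 ^ ((b + 1) * a))%N)).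
Proof.
move=> HPs HAs HA HS0.
have [HP0|HP] := eqVneq P 0.
  have HAE0 : A.['X^E0] = 0.
    case: HS0 => j; rewrite HP0 horner0 dvd0p mulf_eq0 expf_eq0 polyX_eq0 andbF /=.
    by move/eqP.
  case: (leqP E0 a) => HE0; first by exists E0; split => //; left.
  have HA0 : A = 0 by apply: spec_inj HAE0 => i; apply: leq_trans (HAs i) HE0.
  exists 0%N; split; last by left.
  by exists 0%N; rewrite HA0 horner0 mulr0 dvdp0.
have HexP : exists i, P`_i != 0.
  exists (size P).-1; rewrite -lead_coefE lead_coef_eq0 //.
case: (ex_minnP HexP) => b0 Hb0 Hmin.
set P1 := drop_poly b0 P.
have HPP1 : P = P1 * 'X^b0.
  have Ht : take_poly b0 P = 0.
    apply/polyP => i; rewrite coef_take_poly coef0; case: ifP => // Hi.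
    apply/eqP; apply: contraT => Hn; have := Hmin i Hn; lia.
  by rewrite -{1}(poly_take_drop b0 P) Ht add0r.
have HP10 : P1`_0 != 0 by rewrite /P1 coef_drop_poly add0n.
have HP1s : forall i, leq (size P1`_i) a.+1 by move=> i; rewrite /P1 coef_drop_poly.
have Heq : forall E, SS A P E <-> SS A P1 E.
  move=> E; rewrite /SS HPP1 hornerM hornerXn -exprM; exact: ldvd_mulX.
have [E [HE HEb]] := core0 HP10 HP1s HAs HA (proj1 (Heq E0) HS0).
exists E; split; first exact/Heq.
by right; split.
Qed.

Definition isa (l : letter) : bool := if l.1 is Ga then true else false.
Definition ist (l : letter) : bool := if l.1 is Gt then true else false.
Definition isx (l : letter) : bool := if l.1 is Gx then true else false.
Definition sgl (l : letter) : int := if l.2 then -1 else 1.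

Fixpoint tauw (w : word) : int :=
  if w is l :: w' then (if ist l then sgl l else 0) + tauw w' else 0.
Fixpoint xiw (w : word) : int :=
  if w is l :: w' then (if isx l then sgl l else 0) + xiw w' else 0.

Lemma xiw_sigma w : xiw w = sigma_x w.
Proof.
elim: w => [|[g s] w IH]; first by rewrite /sigma_x big_nil.
by rewrite /sigma_x big_cons -/(sigma_x w) -IH /=; case: g; case: s.
Qed.

Lemma eval_fst (w : word) (D : int) (f : laurent2) : (eval_word w (D, f)).1 = tauw w + D * xiw w.
Proof.
elim: w => [|[g s] w IH] /=; first by rewrite mulr0.
rewrite IH; case: g; case: s; rewrite /sgl /=; ring.
Qed.

Fixpoint pA (w : word) : seq (int * int) :=
  if w is l :: w' then
    (if isa l then [:: (- tauw w', - xiw w')] else [::]) ++ pA w'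
  else [::].
Fixpoint pP (w : word) : seq (int * int) :=
  if w is l :: w' then
    (if isx l then [:: (- tauw w', - xiw w' + (if l.2 then 1 else 0))] else [::]) ++ pP w'
  else [::].

Definition LL (ps : seq (int * int)) (D : int) := [seq p.1 + p.2 * D | p <- ps].

Definition inA (L : seq int) (k : int) : bool := foldr (fun e b => (k == e) (+) b) false L.
Definition inP (f : laurent2) (L : seq int) (k : int) : bool :=
  foldr (fun e b => (k - e \in f) (+) b) false L.

Lemma mem_ladd (f g : laurent2) (k : int) : (k \in ladd f g) = (k \in f) (+) (k \in g).
Proof. by rewrite /ladd in_fsetU !in_fsetD; case: (k \in f); case: (k \in g). Qed.

Lemma mem_lshift (f : laurent2) (d k : int) : (k \in Defs.lshift f d) = ((k + d) \in f).
Proof.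
rewrite /Defs.lshift; apply/imfsetP/idP => [[x Hx ->]|H].
  by rewrite subrK.
by exists (k + d) => //; rewrite addrK.
Qed.

Lemma eval_snd (w : word) (D : int) (f : laurent2) (k : int) : (k \in (eval_word w (D, f)).2) =
  inA (LL (pA w) D) k (+) inP f (LL (pP w) D) k.
Proof.
elim: w k => [|[g s] w IH] k /=; first by rewrite in_fset0.
rewrite mem_ladd mem_lshift IH eval_fst.
case: g; case: s => /=; rewrite ?mem_lshift ?in_fset1 ?in_fset0 ?addbA //.
- congr (_ (+) _ (+) _); apply/eqP/eqP => H; lia.
- congr (_ (+) _ (+) _); apply/eqP/eqP => H; lia.
- rewrite [inA _ _ (+) _]addbC; congr (_ (+) _ (+) _); congr (_ \in f); ring.
- rewrite [inA _ _ (+) _]addbC; congr (_ (+) _ (+) _); congr (_ \in f); ring.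
Qed.

Lemma f2_add (x y : F2) : (x + y != 0) = (x != 0) (+) (y != 0).
Proof. by case: x => [[|[|m]] Hm]; case: y => [[|[|n]] Hn]. Qed.

Lemma f2_eq (x y : F2) : (x != 0) = (y != 0) -> x = y.
Proof. by case: x => [[|[|m]] Hm]; case: y => [[|[|n]] Hn] //= _; apply/val_inj. Qed.

Lemma f2_nat (b : bool) : ((b%:R : F2) != 0) = b.
Proof. by case: b. Qed.

Definition Lm (p : {poly F2}) (o k : int) : bool :=
  (0 <= k + o) && (p`_(absz (k + o)) != 0).

Lemma Lm_add p q o k : Lm (p + q) o k = Lm p o k (+) Lm q o k.
Proof. by rewrite /Lm coefD f2_add; case: (0 <= k + o). Qed.

Lemma Lm0 o k : Lm 0 o k = false.
Proof. by rewrite /Lm coef0 eqxx andbF. Qed.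

Lemma Lm_X e N k : 0 <= e + N -> Lm ('X^(absz (e + N))) N k = (k == e).
Proof.
move=> He; rewrite /Lm coefXn f2_nat.
case: (boolP (0 <= k + N)) => Hk /=.
  by apply/eqP/eqP => H; lia.
by apply/esym/eqP => H; lia.
Qed.

Lemma Lm_mulX q e N o k : 0 <= e + N ->
  Lm (q * 'X^(absz (e + N))) (o + N) k = Lm q o (k - e).
Proof.
move=> He; rewrite /Lm coefMXn.
case: (boolP (0 <= k - e + o)) => H1 /=.
  have -> : (0 <= k + (o + N)) = true by apply/idP; lia.
  have -> : (absz (k + (o + N))%R < absz (e + N)%R)%N = false by apply/negbTE; lia.
  by have -> : (absz (k + (o + N))%R - absz (e + N)%R)%N = absz (k - e + o)%R by lia.
case: (boolP (0 <= k + (o + N))) => H2 //=.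
by have -> : (absz (k + (o + N))%R < absz (e + N)%R)%N = true by apply/idP; lia.
Qed.

Lemma Lm_inj p p' (o : int) : (forall k, Lm p o k = Lm p' o k) -> p = p'.
Proof.
move=> H; apply/polyP => i; apply: f2_eq.
have := H (i%:Z - o); rewrite /Lm.
have -> : (i%:Z - o + o) = i%:Z by ring.
by rewrite /=.
Qed.

Definition polyL (N : int) (L : seq int) : {poly F2} := \sum_(e <- L) 'X^(absz (e + N)).

Lemma inA_Lm L N k : (forall e, e \in L -> 0 <= e + N) -> inA L k = Lm (polyL N L) N k.
Proof.
elim: L => [|e L IH] H; first by rewrite /polyL big_nil Lm0.
rewrite /polyL big_cons -/(polyL N L) Lm_add Lm_X ?H ?mem_head //= IH //.
by move=> x Hx; apply: H; rewrite in_cons Hx orbT.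
Qed.

Lemma inP_Lm (f : laurent2) q o L N k : (forall k, (k \in f) = Lm q o k) ->
  (forall e, e \in L -> 0 <= e + N) -> inP f L k = Lm (q * polyL N L) (o + N) k.
Proof.
move=> Hf; elim: L => [|e L IH] H; first by rewrite /polyL big_nil mulr0 Lm0.
rewrite /polyL big_cons -/(polyL N L) mulrDr Lm_add Lm_mulX ?H ?mem_head //= IH ?Hf //.
by move=> x Hx; apply: H; rewrite in_cons Hx orbT.
Qed.

Lemma seq_poly (s : seq int) (o : int) : uniq s -> (forall x, x \in s -> 0 <= x + o) ->
  forall k, (k \in s) = Lm (\sum_(x <- s) 'X^(absz (x + o))) o k.
Proof.
move=> Hu Hs k; elim: s Hu Hs => [|x s IH] Hu Hs; first by rewrite big_nil Lm0.
rewrite big_cons Lm_add Lm_X ?Hs ?mem_head // in_cons.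
move: Hu => /= /andP [Hx Hu].
rewrite -IH //; last by move=> y Hy; apply: Hs; rewrite in_cons Hy orbT.
case: (eqVneq k x) => [->|] //=; by rewrite (negbTE Hx).
Qed.

Lemma fset_poly (f : laurent2) : exists (q : {poly F2}) (o : nat), forall k, (k \in f) = Lm q o%:Z k.
Proof.
pose o := (\sum_(x <- f) absz x)%N.
have Ho : forall x, x \in (f : seq int) -> 0 <= x + o%:Z.
  move=> x Hx; have : (absz x <= o)%N.
    by rewrite /o (big_rem x) //=; apply: leq_addr.
  lia.
exists (\sum_(x <- f) 'X^(absz (x + o%:Z))), o => k.
rewrite -(seq_poly (fset_uniq f) Ho k); by [].
Qed.

Definition Lof (q : {poly F2}) (o : int) : laurent2 :=
  ([fset (i%:Z - o)%R | i in [seq i <- iota 0 (size q) | q`_i != 0]])%fset.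

Lemma mem_Lof q o k : (k \in Lof q o) = Lm q o k.
Proof.
rewrite /Lof /Lm; apply/imfsetP/idP => [[i Hi ->]|/andP [H1 H2]].
  move: Hi; rewrite mem_filter mem_iota => /andP [Hq _].
  have -> : i%:Z - o + o = i%:Z by ring.
  by rewrite /=.
exists (absz (k + o)); last by lia.
rewrite mem_filter mem_iota H2 /= add0n.
by move: H2; apply: contraNT; rewrite -leqNgt => Hs; rewrite nth_default.
Qed.

Lemma solv_ldvd La Lp N : (forall e, e \in La ++ Lp -> 0 <= e + N) ->
  (exists f : laurent2, forall k, inA La k = inP f Lp k) <->
  ldvd (polyL N Lp) (polyL N La).
Proof.
move=> HN.
have HA : forall e, e \in La -> 0 <= e + N by move=> e He; apply: HN; rewrite mem_cat He.
have HP : forall e, e \in Lp -> 0 <= e + N by move=> e He; apply: HN; rewrite mem_cat He orbT.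
split.
  case=> f Hf; have [q [o Hq]] := fset_poly f.
  have H1 : forall k, Lm (polyL N La * 'X^(absz (0 + o%:Z))) (N + o%:Z) k =
                      Lm (q * polyL N Lp) (o%:Z + N) k.
    move=> k; rewrite Lm_mulX; last by rewrite add0r.
    by rewrite subr0 -(inA_Lm k HA) Hf (inP_Lm k Hq HP).
  have H2 : polyL N La * 'X^o = q * polyL N Lp.
    apply: (@Lm_inj _ _ (N + o%:Z)) => k; rewrite H1 addrC; by [].
  exists o; rewrite mulrC H2; exact: dvdp_mulIr.
case=> j /dvdpP [q Hq].
exists (Lof q j%:Z) => k.
rewrite (inA_Lm k HA) (inP_Lm k (mem_Lof q j%:Z) HP) -Hq mulrC addrC.
have := @Lm_mulX (polyL N La) 0 j%:Z N k; rewrite add0r subr0 => <- //.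
Qed.

Definition sg (s : bool) : int := if s then -1 else 1.

Definition biv (ps : seq (int * int)) (s : bool) (am bm : int) : {poly {poly F2}} :=
  \sum_(p <- ps) ('X^(absz (p.1 - am)%R))%:P * 'X^(absz (sg s * p.2 - bm)%R).

Lemma polyL_biv (ps : seq (int * int)) (s : bool) (am bm : int) (E : nat) :
  (forall p, p \in ps -> am <= p.1 /\ bm <= sg s * p.2) ->
  polyL (- am - bm * E%:Z) (LL ps (sg s * E%:Z)) = (biv ps s am bm).['X^E].
Proof.
move=> H; rewrite /polyL /LL big_map /biv horner_sum; apply: eq_big_seq => p Hp.
rewrite hornerCM hornerXn -exprM -exprD; congr ('X^_).
have [H1 H2] := H p Hp; clear H Hp; move: H1 H2; case: s; rewrite /sg; move: (p.1) (p.2) => x y H1 H2; nia.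
Qed.

Lemma LL_nonneg (ps : seq (int * int)) (s : bool) (am bm : int) (E : nat) :
  (forall p, p \in ps -> am <= p.1 /\ bm <= sg s * p.2) ->
  forall e : int, e \in LL ps (sg s * E%:Z) -> 0 <= e + (- am - bm * E%:Z).
Proof.
move=> H e /mapP [p Hp ->]; have [H1 H2] := H p Hp; clear H Hp; move: H1 H2; case: s; rewrite /sg; move: (p.1) (p.2) => x y H1 H2; nia.
Qed.

Lemma biv_coef (ps : seq (int * int)) (s : bool) (am bm : int) (a : nat) :
  (forall p, p \in ps -> am <= p.1 /\ p.1 - am <= a%:Z) ->
  forall i, leq (size (biv ps s am bm)`_i) a.+1.
Proof.
move=> H i; rewrite /biv; elim: ps H => [|p ps IH] H; first by rewrite big_nil coef0 size_poly0.
rewrite big_cons coefD; apply: leq_trans (size_polyD _ _) _; rewrite geq_max; apply/andP; split.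
  rewrite coefCM coefXn; case: (i == _); rewrite ?mulr0 ?size_poly0 // mulr1 size_polyXn.
  have [H1 H2] := H p (mem_head _ _); move: H1 H2; move: (p.1) => x; lia.
by apply: IH => q Hq; apply: H; rewrite in_cons Hq orbT.
Qed.

Lemma biv_size (ps : seq (int * int)) (s : bool) (am bm : int) (b : nat) :
  (forall p, p \in ps -> bm <= sg s * p.2 /\ sg s * p.2 - bm <= b%:Z) ->
  leq (size (biv ps s am bm)) b.+1.
Proof.
rewrite /biv; elim: ps => [|p ps IH] H; first by rewrite big_nil size_poly0.
rewrite big_cons; apply: leq_trans (size_polyD _ _) _; rewrite geq_max; apply/andP; split.
  apply: leq_trans (size_polyMleq _ _) _; rewrite size_polyXn size_polyC.
  have [H1 H2] := H p (mem_head _ _); move: H1 H2; move: (sg s * p.2) => y.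
  case: (_ != 0) => /=; lia.
by apply: IH => q Hq; apply: H; rewrite in_cons Hq orbT.
Qed.

Fixpoint sumw (v : letter -> int) (w : word) : int :=
  if w is l :: w' then v l + sumw v w' else 0.

Lemma spread (v : letter -> int) (c : pred letter) w i j :
  (forall l, v l <= (c l : nat)%:Z /\ - (c l : nat)%:Z <= v l) ->
  sumw v (drop i w) - sumw v (drop j w) <= (count c w)%:Z.
Proof.
move=> Hv; elim: w i j => [|l w IH] i j; first by case: i; case: j => /=; rewrite subrr.
have [H1 H2] := Hv l.
case: i => [|i]; case: j => [|j]; rewrite ?drop0 ?drop_cons /=.
- rewrite subrr; lia.
- have := IH 0%N j; rewrite drop0; lia.
- have := IH i 0%N; rewrite drop0; lia.
- have := IH i j; lia.
Qed.

Lemma tauw_sumw w : tauw w = sumw (fun l => if ist l then sgl l else 0) w.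
Proof. by elim: w => [|l w IH] //=; rewrite IH. Qed.
Lemma xiw_sumw w : xiw w = sumw (fun l => if isx l then sgl l else 0) w.
Proof. by elim: w => [|l w IH] //=; rewrite IH. Qed.

Lemma tau_spread w i j : tauw (drop i w) - tauw (drop j w) <= (count ist w)%:Z.
Proof.
rewrite !tauw_sumw; apply: spread => l; rewrite /sgl; case: (ist l); case: l.2 => /=; lia.
Qed.
Lemma xi_spread w i j : xiw (drop i w) - xiw (drop j w) <= (count isx w)%:Z.
Proof.
rewrite !xiw_sumw; apply: spread => l; rewrite /sgl; case: (isx l); case: l.2 => /=; lia.
Qed.

Lemma pairs_suffix w p : p \in pA w ++ pP w ->
  exists i, p = (- tauw (drop i w), - xiw (drop i w)).
Proof.
elim: w => [|[g s] w IH] //=.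
rewrite /isa /isx /=; case: g => /=; rewrite ?in_cons ?mem_cat ?in_cons.
- case/orP => [/eqP ->|H]; first by exists 1%N; rewrite drop1.
  have [i Hi] : exists i, p = (- tauw (drop i w), - xiw (drop i w)).
    by apply: IH; rewrite mem_cat H.
  by exists i.+1.
- rewrite -mem_cat => H; have [i Hi] := IH H; by exists i.+1.
- case/orP => [H|/orP [/eqP ->|H]].
  + have [i Hi] : exists i, p = (- tauw (drop i w), - xiw (drop i w)).
      by apply: IH; rewrite mem_cat H.
    by exists i.+1.
  + case: s => /=.
      exists 0%N; rewrite drop0 /= /ist /isx /sgl /=; congr pair; ring.
    by exists 1%N; rewrite drop1 addr0.
  + have [i Hi] : exists i, p = (- tauw (drop i w), - xiw (drop i w)).
      by apply: IH; rewrite mem_cat H orbT.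
    by exists i.+1.
Qed.

Lemma minex (x0 : int) L : exists2 m, m \in x0 :: L & forall x, x \in x0 :: L -> m <= x.
Proof.
elim: L x0 => [|y L IH] x0.
  by exists x0; rewrite ?mem_head // => x; rewrite in_cons orbF => /eqP ->.
have [m Hm Hmin] := IH y.
case: (boolP (x0 <= m)) => Hx.
  exists x0; first exact: mem_head.
  move=> x; rewrite in_cons => /orP [/eqP ->//|H]; have := Hmin x H; lia.
exists m; first by rewrite in_cons Hm orbT.
move=> x; rewrite in_cons => /orP [/eqP ->|H]; last exact: Hmin.
lia.
Qed.

Lemma exmin (L : seq int) (c : nat) : (forall x y, x \in L -> y \in L -> x - y <= c%:Z) ->
  exists m, forall x, x \in L -> m <= x /\ x - m <= c%:Z.
Proof.
case: L => [|x0 L] H; first by exists 0.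
have [m Hm Hmin] := minex x0 L.
exists m => x Hx; split; first exact: Hmin.
exact: H.
Qed.

Lemma sol_iff (w : word) D : tauw w = 0 -> xiw w = 0 ->
  (exists f, is_solution w (D, f)) <->
  (exists f : laurent2, forall k, inA (LL (pA w) D) k = inP f (LL (pP w) D) k).
Proof.
move=> Ht Hx; split.
  case=> f Hf; exists f => k; have := eval_snd w D f k; rewrite Hf /= in_fset0.
  by case: (inA _ k); case: (inP _ _ k).
case=> f Hf; exists f; rewrite /is_solution.
have H1 := eval_fst w D f; have H2 := eval_snd w D f.
move: H1 H2; case: (eval_word w (D, f)) => x y /= -> H2.
rewrite Ht Hx mulr0 addr0 /L2one; congr pair.
apply/fsetP => k; rewrite H2 Hf in_fset0; by case: (inP _ _ k).
Qed.

Lemma count_le (w : word) : (count ist w + count isx w <= size w)%N.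
Proof.
elim: w => [|[g s] w IH] //=; case: g => /=; lia.
Qed.

Lemma pP_nil (w : word) : count isx w = 0%N -> pP w = [::].
Proof.
elim: w => [|[g s] w IH] //=; rewrite /isx /=; case: g => //= H; exact: IH.
Qed.

Lemma main_nat (w : word) : sigma_x w = 0 -> (exists g, is_solution w g) ->
  exists (delta : int) (f : laurent2), is_solution w (delta, f) /\
   ((absz delta <= count ist w)%N \/ ((1 <= count isx w)%N /\
     (absz delta < (count isx w + 3) * count ist w + 1 + 2 ^ ((count isx w + 1) * count ist w))%N)).
Proof.
move=> Hs [[D0 f0] H0].
have Hx : xiw w = 0 by rewrite xiw_sigma.
have Ht : tauw w = 0.
  have := eval_fst w D0 f0; rewrite H0 Hx mulr0 addr0 /=; by move=> <-.
set a := count ist w; set b := count isx w.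
set s := (D0 < 0).
set E0 := absz D0.
have HD0 : D0 = sg s * E0%:Z by rewrite /s /E0 /sg; case: (boolP (D0 < 0)) => H; lia.
set ps := pA w ++ pP w.
have [am Ham] : exists am, forall x, x \in [seq p.1 | p <- ps] -> am <= x /\ x - am <= a%:Z.
  apply: exmin => x y /mapP [p Hp ->] /mapP [q Hq ->].
  have [i ->] := pairs_suffix Hp; have [j ->] := pairs_suffix Hq.
  have := tau_spread w j i; rewrite /= -/a; lia.
have [bm Hbm] : exists bm, forall x, x \in [seq sg s * p.2 | p <- ps] -> bm <= x /\ x - bm <= b%:Z.
  apply: exmin => x y /mapP [p Hp ->] /mapP [q Hq ->].
  have [i ->] := pairs_suffix Hp; have [j ->] := pairs_suffix Hq.
  have := xi_spread w j i; have := xi_spread w i j; rewrite /= -/b.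
  have : sg s = 1 \/ sg s = -1 by rewrite /sg; case: ifP => _; [right|left].
  case => ->; lia.
have Hps : forall p, p \in ps -> (am <= p.1 /\ p.1 - am <= a%:Z) /\ (bm <= sg s * p.2 /\ sg s * p.2 - bm <= b%:Z).
  move=> p Hp; split; [apply: Ham | apply: Hbm]; exact: (map_f _ Hp).
have HpA : forall p, p \in pA w -> (am <= p.1 /\ p.1 - am <= a%:Z) /\ (bm <= sg s * p.2 /\ sg s * p.2 - bm <= b%:Z).
  by move=> p Hp; apply: Hps; rewrite mem_cat Hp.
have HpP : forall p, p \in pP w -> (am <= p.1 /\ p.1 - am <= a%:Z) /\ (bm <= sg s * p.2 /\ sg s * p.2 - bm <= b%:Z).
  by move=> p Hp; apply: Hps; rewrite mem_cat Hp orbT.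
set A := biv (pA w) s am bm.
set P := biv (pP w) s am bm.
have Hbridge : forall E : nat, (exists f, is_solution w (sg s * E%:Z, f)) <-> SS A P E.
  move=> E; rewrite sol_iff //.
  have HA1 : forall p, p \in pA w -> am <= p.1 /\ bm <= sg s * p.2.
    by move=> p Hp; have [[? ?] [? ?]] := HpA p Hp.
  have HP1 : forall p, p \in pP w -> am <= p.1 /\ bm <= sg s * p.2.
    by move=> p Hp; have [[? ?] [? ?]] := HpP p Hp.
  rewrite (solv_ldvd (N := - am - bm * E%:Z)).
    by rewrite /SS /A /P !polyL_biv.
  move=> e; rewrite mem_cat => /orP [He|He]; [exact: (LL_nonneg HA1 He) | exact: (LL_nonneg HP1 He)].
have HAc : forall i, leq (size A`_i) a.+1.
  by apply: biv_coef => p Hp; have [[? ?] [? ?]] := HpA p Hp.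
have HPc : forall i, leq (size P`_i) a.+1.
  by apply: biv_coef => p Hp; have [[? ?] [? ?]] := HpP p Hp.
have HAs : leq (size A) b.+1.
  by apply: biv_size => p Hp; have [[? ?] [? ?]] := HpA p Hp.
have HS0 : SS A P E0 by apply/Hbridge; rewrite -HD0; exists f0.
have [E [HE HEb]] := core HPc HAc HAs HS0.
have [f Hf] := (proj2 (Hbridge E)) HE.
exists (sg s * E%:Z), f; split => //.
have -> : absz (sg s * E%:Z) = E.
  have : sg s = 1 \/ sg s = -1 by rewrite /sg; case: ifP => _; [right|left].
  case => ->; lia.
case: HEb => [H|[HP H]]; [by left | right; split => //].
rewrite lt0n; apply/eqP => Hb0; move: HP; rewrite /P pP_nil // /biv big_nil eqxx //.
Qed.

From Stdlib Require Reals Lra.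

Module RealPart.
Import Stdlib.micromega.Lra.
Local Notation RR := Rdefinitions.R.
Local Notation Rle := Rdefinitions.Rle.
Local Notation Rlt := Rdefinitions.Rlt.
Local Notation INR := Raxioms.INR.

Lemma expn2E m : expn 2 m = Nat.pow 2 m.
Proof. elim: m => // m IH; rewrite expnS IH /=; lia. Qed.

Lemma final_real (n a b E : nat) : leq (addn a b) n ->
  (leq E a \/ (leq 1 b /\ leq E.+1 (addn (addn (muln (addn b 3) a) 1) (expn 2 (muln (addn b 1) a))))) ->
  Rle (INR E) (Defs.bound n).
Proof.
move=> Hab HE; rewrite /Defs.bound.
have Hpos : Rlt (Rdefinitions.IZR BinNums.Z0) (Rpower.Rpower (INR 2) (Rdefinitions.Rdiv (INR (n * n)) (INR 2))).
  exact: Exp_prop.exp_pos.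
case: HE => [HE|[Hb HE]].
  have : (E <= 2 * (n * n) + 3 * n + 1)%N by nia.
  move/leP/RIneq.le_INR => H; lra.
set m := ((b + 1) * a)%N.
have H1 : ((a + b) * (a + b) <= n * n)%N by apply: leq_mul.
have H2 : (2 * a <= a * a + 1)%N by clear; case: a => [|a] //; nia.
have H3 : (b * b >= 1)%N by nia.
have Hm : (2 * m <= n * n)%N by rewrite /m; nia.
have HE' : (E <= (2 * (n * n) + 3 * n + 1) + 2 ^ m)%N.
by rewrite /m in HE *; nia.
move/leP/RIneq.le_INR: HE'; rewrite RIneq.plus_INR => HE'.
have H4 : Rle (INR (2 ^ m)) (Rpower.Rpower (INR 2) (Rdefinitions.Rdiv (INR (n * n)) (INR 2))).
  rewrite expn2E RIneq.pow_INR -Rpower.Rpower_pow; last by rewrite /=; lra.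
  apply: Rpower.Rle_Rpower; first by rewrite /=; lra.
  move/leP/RIneq.le_INR: Hm; rewrite RIneq.mult_INR /= => Hm.
  lra.
lra.
Qed.
End RealPart.

Theorem mainTheorem1 (w : word) :
  sigma_x w = 0%R ->
  (exists g : L2, is_solution w g) ->
  exists (delta : int) (f : laurent2),
    is_solution w (delta, f) /\ abs_le_bound delta (size w).
Proof.
move=> Hs Hg; have [d [f [Hsol Hb]]] := main_nat Hs Hg.
exists d, f; split => //; rewrite /abs_le_bound.
exact: (RealPart.final_real (count_le w) Hb).
Qed.
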